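(* Let $n$ be a nonzero integer and let $a<b<c$ be positive integers with $ac>n$, such that $ac+n=s^2$ and $bc+n=t^2$ for nonnegative integers $s,t$. Put $\theta_1=\sqrt{1+\frac{n}{ac}}$ and $\theta_2=\sqrt{1+\frac{n}{bc}}$. Then every solution in positive integers $x,y,z$ of the system \[ az^2-cx^2=n(a-c),\qquad bz^2-cy^2=n(b-c) \] satisfies \[ \max\Big(\Big|\theta_1-\frac{sbx}{abz}\Big|,\ \Big|\theta_2-\frac{tay}{abz}\Big|\Big)<\frac{c\,|n|}{a}\,z^{-2}. \] *)

(* Defs.v *)
From Stdlib Require Export Reals ZArith.

(* Main.v *)
Require Import Defs.
From Stdlib Require Import Reals Lra Lia Psatz ZArith.
Open Scope R_scope.

Lemma key (n a c s x z : R) : n <> 0 -> 0 < a -> a < c -> 0 < z -> 0 < x ->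
  n < a * c -> 0 <= s -> s * s = a * c + n -> a * z^2 - c * x^2 = n * (a - c) ->
  Rabs (sqrt (1 + n / (a * c)) - s * x / (a * z)) < c * Rabs n / a * / z ^ 2.
Proof.
  intros Hn Ha Hac Hz Hx Hn2 Hs Hs2 He.
  assert (Hc : 0 < c) by lra.
  assert (Hw := sqrt_lt_R0 (a*c) ltac:(nra)).
  assert (Hw2 := sqrt_sqrt (a*c) ltac:(nra)).
  set (w := sqrt (a*c)) in *.
  assert (Hr : sqrt (1 + n / (a * c)) = s / w).
  { replace (1 + n / (a*c)) with ((s/w)*(s/w)).
    - apply sqrt_square. unfold Rdiv; apply Rmult_le_pos; [lra|left; apply Rinv_0_lt_compat; lra].
    - field_simplify_eq; [|lra]. replace (w^2) with (w*w) by ring. rewrite Hw2. nra. }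
  rewrite Hr.
  assert (Hd : s / w - s * x / (a * z) = s * (a*z - w*x) / (w*a*z)) by (field; lra).
  rewrite Hd.
  assert (Hp : 0 < a*z + w*x) by nra.
  assert (Hq : (a*z - w*x) = a*n*(a-c) / (a*z + w*x)).
  { field_simplify_eq; [|lra]. nra. }
  rewrite Hq.
  assert (Hm : s * (a * n * (a - c) / (a * z + w * x)) / (w * a * z)
     = n * (- (s * (c-a) / (w * z * (a*z + w*x))))) by (field; repeat split; lra).
  rewrite Hm, Rabs_mult, Rabs_Ropp.
  assert (Hnpos : 0 < Rabs n) by (apply Rabs_pos_lt; auto).
  assert (Hkey : s*(c-a)*z < c*w*z + c*c*x).
  { destruct (Rle_or_lt n 0) as [Hle|Hgt].
    - assert (s <= w) by nra.
      assert (s*(c-a)*z <= w*(c-a)*z) by (apply Rmult_le_compat_r; [lra|]; apply Rmult_le_compat_r; lra).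
      assert (0 < c*c*x) by (apply Rmult_lt_0_compat; nra).
      assert (0 < w*a*z) by (apply Rmult_lt_0_compat; [apply Rmult_lt_0_compat|]; lra). nra.
    - assert (0 < n*(c-a)) by (apply Rmult_lt_0_compat; lra).
      assert (c*x*x > a*z*z) by (replace (c*x*x) with (c*x^2) by ring; replace (a*z*z) with (a*z^2) by ring; lra).
      assert (c*(c*x*x) > c*(a*z*z)) by (apply Rmult_lt_compat_l; lra).
      assert (c*x*(c*x) > w*z*(w*z)) by (replace (w*z*(w*z)) with ((w*w)*z*z) by ring; rewrite Hw2; nra).
      assert (c*x > w*z).
      { destruct (Rle_or_lt (c*x) (w*z)) as [Hq1|Hq1]; [|lra].
        assert (0 < c*x) by (apply Rmult_lt_0_compat; lra).
        assert (c*x*(c*x) <= w*z*(w*z)) by (apply Rmult_le_compat; lra). lra. }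
      assert (s < 2*w).
      { destruct (Rle_or_lt (2*w) s) as [Hq1|Hq1]; [|lra].
        assert (2*w*(2*w) <= s*s) by (apply Rmult_le_compat; lra). nra. }
      assert (s*(c-a)*z < 2*w*c*z).
      { assert (Hq2 : s*(c-a) < 2*w*c) by nra. apply Rmult_lt_compat_r with (r:=z) in Hq2; lra. }
      assert (c*(c*x) > c*(w*z)) by (apply Rmult_lt_compat_l; lra). nra. }
  rewrite (Rabs_pos_eq (s * (c - a) / _)).
  2:{ unfold Rdiv; apply Rmult_le_pos; [nra|left; apply Rinv_0_lt_compat; apply Rmult_lt_0_compat; nra]. }
  apply Rlt_0_minus.
  replace (c * Rabs n / a * / z ^ 2 - Rabs n * (s * (c - a) / (w * z * (a * z + w * x))))
    with (Rabs n * ((c*w*z + c*c*x - s*(c-a)*z)*a) / (a * z^2 * (w*(a*z+w*x)))).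
  2:{ field_simplify_eq; [|repeat split; nra]. replace (w^2) with (w*w) by ring. rewrite Hw2. ring. }
  apply Rdiv_lt_0_compat.
  - apply Rmult_lt_0_compat; [lra|]. apply Rmult_lt_0_compat; lra.
  - apply Rmult_lt_0_compat; [apply Rmult_lt_0_compat; [lra|apply pow_lt; lra]|].
    apply Rmult_lt_0_compat; lra.
Qed.
Theorem lemma1 (n a b c s t x y z : Z) :
  n <> 0%Z ->
  (0 < a)%Z -> (a < b)%Z -> (b < c)%Z ->
  (a * c > n)%Z ->
  (0 <= s)%Z -> (0 <= t)%Z ->
  (a * c + n = s ^ 2)%Z -> (b * c + n = t ^ 2)%Z ->
  (0 < x)%Z -> (0 < y)%Z -> (0 < z)%Z ->
  (a * z ^ 2 - c * x ^ 2 = n * (a - c))%Z ->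
  (b * z ^ 2 - c * y ^ 2 = n * (b - c))%Z ->
  let theta1 := sqrt (1 + IZR n / (IZR a * IZR c)) in
  let theta2 := sqrt (1 + IZR n / (IZR b * IZR c)) in
  Rmax (Rabs (theta1 - IZR s * IZR b * IZR x / (IZR a * IZR b * IZR z)))
       (Rabs (theta2 - IZR t * IZR a * IZR y / (IZR a * IZR b * IZR z)))
  < IZR c * Rabs (IZR n) / IZR a * / (IZR z ^ 2).
Proof.
  intros Hn Ha Hab Hbc Hac Hs Ht Hs2 Ht2 Hx Hy Hz He1 He2 th1 th2.
  assert (Rn : IZR n <> 0) by (apply not_0_IZR; auto).
  apply IZR_lt in Ha, Hab, Hbc, Hx, Hy, Hz.
  apply Z.gt_lt, IZR_lt in Hac. rewrite mult_IZR in Hac.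
  apply IZR_le in Hs, Ht.
  assert (Rs2 : IZR s * IZR s = IZR a * IZR c + IZR n)
    by (rewrite <- !mult_IZR, <- plus_IZR; f_equal; lia).
  assert (Rt2 : IZR t * IZR t = IZR b * IZR c + IZR n)
    by (rewrite <- !mult_IZR, <- plus_IZR; f_equal; lia).
  assert (R1 : IZR a * IZR z ^ 2 - IZR c * IZR x ^ 2 = IZR n * (IZR a - IZR c))
    by (simpl; rewrite !Rmult_1_r, <- !mult_IZR, <- !minus_IZR, <- !mult_IZR; f_equal; lia).
  assert (R2 : IZR b * IZR z ^ 2 - IZR c * IZR y ^ 2 = IZR n * (IZR b - IZR c))
    by (simpl; rewrite !Rmult_1_r, <- !mult_IZR, <- !minus_IZR, <- !mult_IZR; f_equal; lia).
  assert (Hbn : IZR n < IZR b * IZR c) by nra.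
  apply Rmax_lub_lt.
  - replace (IZR s * IZR b * IZR x / (IZR a * IZR b * IZR z)) with (IZR s * IZR x / (IZR a * IZR z)) by (field; lra).
    apply key; assumption || lra.
  - replace (IZR t * IZR a * IZR y / (IZR a * IZR b * IZR z)) with (IZR t * IZR y / (IZR b * IZR z)) by (field; lra).
    apply Rlt_le_trans with (IZR c * Rabs (IZR n) / IZR b * / IZR z ^ 2).
    + apply key; assumption || lra.
    + apply Rmult_le_compat_r; [left; apply Rinv_0_lt_compat, pow_lt; lra|].
      unfold Rdiv. apply Rmult_le_compat_l; [apply Rmult_le_pos; [lra|apply Rabs_pos]|].
      apply Rinv_le_contravar; lra.
Qed.
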